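(* Let $X$ be a real Hausdorff locally convex topological vector space, let $f:X\to\overline{\mathbb R}$ be proper, convex and lower semicontinuous, and let $U\subseteq\operatorname{dom} f$ be self-segment-dense in $\operatorname{dom} f$. Then $f=\overline{f_U}$ on $\operatorname{co}(U)$ and $\overline{f_U}=\overline{f_{\operatorname{co}(U)}}$ on $X$.
   Context: $\overline{\mathbb R}=\mathbb R\cup\{\pm\infty\}$; $\operatorname{dom} f=\{x:f(x)<+\infty\}$; proper: $\operatorname{dom} f\ne\emptyset$ and $f>-\infty$. $\operatorname{co}$ is the convex hull. For $W\subseteq\operatorname{dom} f$: $\operatorname{epi} f_W=\{(w,r)\in W\times\mathbb R:f(w)\le r\}$ and $\overline{f_W}$ is the function on $X$ whose epigraph is $\operatorname{cl}(\operatorname{epi} f_W)$ in $X\times\mathbb R$, i.e. $\overline{f_W}(x)=\inf\{r:(x,r)\in\operatorname{cl}(\operatorname{epi} f_W)\}$ ($\inf\emptyset=+\infty$). $[x,y]=\{x+t(y-x):t\in[0,1]\}$. Self-segment-dense: for convex $V$ and $U\subseteq V$, $U$ is self-segment-dense in $V$ if $V\subseteq\operatorname{cl}U$ and for all $x,y\in U$, $[x,y]\cap U$ is dense in $[x,y]$. *)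

(* Defs.v *)
From Stdlib Require Import Reals Classical ClassicalEpsilon ClassicalDescription.
Open Scope R_scope.

Definition R_open (S : R -> Prop) : Prop :=
  forall t, S t -> exists eps, 0 < eps /\ forall s, Rabs (s - t) < eps -> S s.

Record LCTVS := {
  carrier :> Type;
  vadd : carrier -> carrier -> carrier;
  vscal : R -> carrier -> carrier;
  vzero : carrier;
  vadd_assoc : forall x y z, vadd x (vadd y z) = vadd (vadd x y) z;
  vadd_comm : forall x y, vadd x y = vadd y x;
  vadd_0l : forall x, vadd vzero x = x;
  vadd_oppl : forall x, vadd (vscal (-1) x) x = vzero;
  vscal_1 : forall x, vscal 1 x = x;
  vscal_assoc : forall a b x, vscal a (vscal b x) = vscal (a * b) x;
  vscal_distr_R : forall a b x, vscal (a + b) x = vadd (vscal a x) (vscal b x);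
  vscal_distr_V : forall a x y, vscal a (vadd x y) = vadd (vscal a x) (vscal a y);
  is_open : (carrier -> Prop) -> Prop;
  open_full : is_open (fun _ => True);
  open_union : forall F : (carrier -> Prop) -> Prop,
      (forall A, F A -> is_open A) -> is_open (fun x => exists A, F A /\ A x);
  open_inter : forall A B, is_open A -> is_open B -> is_open (fun x => A x /\ B x);
  vadd_cont : forall W x y, is_open W -> W (vadd x y) ->
      exists A B, is_open A /\ is_open B /\ A x /\ B y /\
        forall a b, A a -> B b -> W (vadd a b);
  vscal_cont : forall W t x, is_open W -> W (vscal t x) ->
      exists eps B, 0 < eps /\ is_open B /\ B x /\
        forall s b, Rabs (s - t) < eps -> B b -> W (vscal s b);
  hausdorff : forall x y, x <> y ->
      exists A B, is_open A /\ is_open B /\ A x /\ B y /\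
        forall z, A z -> B z -> False;
  loc_convex : forall W x, is_open W -> W x ->
      exists C, is_open C /\ C x /\ (forall z, C z -> W z) /\
        forall y z t, C y -> C z -> 0 <= t <= 1 ->
          C (vadd (vscal t y) (vscal (1 - t) z))
}.

Arguments vadd {_}. Arguments vscal {_}. Arguments is_open {_}.

Section Defs.
Variable X : LCTVS.

Definition convex_set (C : X -> Prop) : Prop :=
  forall x y t, C x -> C y -> 0 <= t <= 1 -> C (vadd (vscal t x) (vscal (1 - t) y)).

Definition co (U : X -> Prop) : X -> Prop :=
  fun x => forall C, convex_set C -> (forall u, U u -> C u) -> C x.

Definition closure (S : X -> Prop) : X -> Prop :=
  fun x => forall A, is_open A -> A x -> exists y, A y /\ S y.

Definition segment (x y : X) : X -> Prop :=
  fun z => exists t, 0 <= t <= 1 /\ z = vadd x (vscal t (vadd y (vscal (-1) x))).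

(** U is self-segment-dense in the convex set V (V ⊆ cl U; for x,y in U,
    [x,y] ∩ U is dense in [x,y] for the relative topology of [x,y]). *)
Definition self_segment_dense (U V : X -> Prop) : Prop :=
  convex_set V /\ (forall u, U u -> V u) /\
  (forall v, V v -> closure U v) /\
  (forall x y, U x -> U y ->
     forall z, segment x y z -> closure (fun w => segment x y w /\ U w) z).

(** closure in X x R (product topology, via basic neighbourhoods A x ]r-eps,r+eps[) *)
Definition closureXR (S : X -> R -> Prop) : X -> R -> Prop :=
  fun x r => forall A eps, is_open A -> A x -> 0 < eps ->
    exists y s, A y /\ Rabs (s - r) < eps /\ S y s.

End Defs.

Arguments convex_set {_}. Arguments co {_}. Arguments closure {_}.
Arguments segment {_}. Arguments self_segment_dense {_}. Arguments closureXR {_}.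

Inductive ER : Type := Fin (r : R) | PInf | MInf.

Definition ER_le (a b : ER) : Prop :=
  match a, b with
  | MInf, _ => True
  | _, PInf => True
  | Fin x, Fin y => x <= y
  | _, _ => False
  end.

Definition ER_lt (a b : ER) : Prop := ER_le a b /\ a <> b.

(** infimum of a set of reals in the extended reals (inf of empty set = +oo) *)
Definition ER_inf (S : R -> Prop) : ER :=
  if excluded_middle_informative (exists r, S r) then
    if excluded_middle_informative (exists m, forall r, S r -> m <= r) then
      Fin (epsilon (inhabits 0)
             (fun m => (forall r, S r -> m <= r) /\
                       forall m', (forall r, S r -> m' <= r) -> m' <= m))
    else MInf
  else PInf.

Section Fun.
Variable X : LCTVS.
Variable f : X -> ER.

Definition dom (x : X) : Prop := f x <> PInf.

Definition proper : Prop := (exists x, dom x) /\ forall x, f x <> MInf.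

Definition convex_fun : Prop :=
  forall x y r s t, ER_le (f x) (Fin r) -> ER_le (f y) (Fin s) -> 0 <= t <= 1 ->
    ER_le (f (vadd (vscal t x) (vscal (1 - t) y))) (Fin (t * r + (1 - t) * s)).

Definition lsc : Prop :=
  forall x r, ER_lt (Fin r) (f x) ->
    exists A, is_open A /\ A x /\ forall y, A y -> ER_lt (Fin r) (f y).

Definition epi_restr (W : X -> Prop) : X -> R -> Prop :=
  fun w r => W w /\ ER_le (f w) (Fin r).

Definition fbar (W : X -> Prop) (x : X) : ER :=
  ER_inf (fun r => closureXR (epi_restr W) x r).

End Fun.

Arguments dom {_}. Arguments proper {_}. Arguments convex_fun {_}.
Arguments lsc {_}. Arguments epi_restr {_}. Arguments fbar {_}.

(* Main.v *)
Require Import Defs.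
From Stdlib Require Import Reals Lra Classical ClassicalEpsilon FunctionalExtensionality PropExtensionality.
Open Scope R_scope.
Arguments vzero {_}. Arguments vadd_assoc {_}. Arguments vadd_comm {_}. Arguments vadd_0l {_}.
Arguments vadd_oppl {_}. Arguments vscal_1 {_}. Arguments vscal_assoc {_}. Arguments vscal_distr_R {_}.
Arguments vscal_distr_V {_}. Arguments vadd_cont {_}. Arguments vscal_cont {_}. Arguments hausdorff {_}.
Arguments loc_convex {_}. Arguments open_inter {_}. Arguments open_full {_}. Arguments open_union {_}.

Lemma vadd_0r {X : LCTVS} (x : X) : vadd x vzero = x.
Proof. rewrite vadd_comm; apply vadd_0l. Qed.

Lemma vadd_oppr {X : LCTVS} (x : X) : vadd x (vscal (-1) x) = vzero.
Proof. rewrite vadd_comm; apply vadd_oppl. Qed.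

Lemma vcancel {X : LCTVS} (x y : X) : vadd x y = x -> y = vzero.
Proof.
  intro H. transitivity (vadd (vadd (vscal (-1) x) x) y).
  - rewrite vadd_oppl, vadd_0l; reflexivity.
  - rewrite <- vadd_assoc, H. apply vadd_oppl.
Qed.

Lemma vscal_0 {X : LCTVS} (x : X) : vscal 0 x = vzero.
Proof.
  apply (vcancel (vscal 0 x)). rewrite <- vscal_distr_R. f_equal; ring.
Qed.

Lemma vscal_zero {X : LCTVS} (r : R) : vscal r ((@vzero X)) = vzero.
Proof.
  rewrite <- (vscal_0 ((@vzero X))), vscal_assoc. f_equal; ring.
Qed.

Definition L4 {X : LCTVS} (a b c d : X) (k1 k2 k3 k4 : R) : X :=
  vadd (vscal k1 a) (vadd (vscal k2 b) (vadd (vscal k3 c) (vscal k4 d))).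

Lemma L4_eq {X : LCTVS} (a b c d : X) k1 k2 k3 k4 m1 m2 m3 m4 :
  k1 = m1 -> k2 = m2 -> k3 = m3 -> k4 = m4 -> L4 a b c d k1 k2 k3 k4 = L4 a b c d m1 m2 m3 m4.
Proof. intros; subst; reflexivity. Qed.

Lemma L4_base {X : LCTVS} (a b c d : X) : (@vzero X) = L4 a b c d 0 0 0 0.
Proof. unfold L4; rewrite !vscal_0, !vadd_0l; reflexivity. Qed.

Lemma swap12 {X : LCTVS} (x y z : X) : vadd x (vadd y z) = vadd y (vadd x z).
Proof. rewrite !vadd_assoc, (vadd_comm x y); reflexivity. Qed.

Lemma merge {X : LCTVS} (k m : R) (x z : X) : vadd (vscal k x) (vadd (vscal m x) z) = vadd (vscal (k+m) x) z.
Proof. rewrite vadd_assoc, vscal_distr_R; reflexivity. Qed.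

Lemma ab1 {X : LCTVS} (a b c d : X) k k1 k2 k3 k4 :
  vadd (vscal k a) (L4 a b c d k1 k2 k3 k4) = L4 a b c d (k+k1) k2 k3 k4.
Proof. unfold L4; apply merge. Qed.
Lemma ab2 {X : LCTVS} (a b c d : X) k k1 k2 k3 k4 :
  vadd (vscal k b) (L4 a b c d k1 k2 k3 k4) = L4 a b c d k1 (k+k2) k3 k4.
Proof. unfold L4; rewrite swap12, merge; reflexivity. Qed.
Lemma ab3 {X : LCTVS} (a b c d : X) k k1 k2 k3 k4 :
  vadd (vscal k c) (L4 a b c d k1 k2 k3 k4) = L4 a b c d k1 k2 (k+k3) k4.
Proof. unfold L4; rewrite swap12, (swap12 (vscal k c)), merge; reflexivity. Qed.
Lemma ab4 {X : LCTVS} (a b c d : X) k k1 k2 k3 k4 :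
  vadd (vscal k d) (L4 a b c d k1 k2 k3 k4) = L4 a b c d k1 k2 k3 (k+k4).
Proof. unfold L4; rewrite swap12, (swap12 (vscal k d)), (swap12 (vscal k d)).
  rewrite (vadd_comm (vscal k d) (vscal k4 d)), <- vscal_distr_R, Rplus_comm; reflexivity. Qed.

(* normalize goal E = F with atoms a b c d *)
Ltac vprep a b c d :=
  try rewrite <- (vscal_1 a); try rewrite <- (vscal_1 b);
  try rewrite <- (vscal_1 c); try rewrite <- (vscal_1 d);
  repeat (rewrite ?vscal_distr_V, ?vscal_assoc, ?vscal_zero, ?vadd_0l, ?vadd_0r).

Ltac vsolve a b c d :=
  vprep a b c d;
  match goal with |- ?E = ?F =>
    rewrite <- (vadd_0r E), <- (vadd_0r F), (L4_base a b c d) end;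
  repeat rewrite <- vadd_assoc;
  repeat (rewrite ?ab1, ?ab2, ?ab3, ?ab4);
  apply L4_eq.

Lemma test {X : LCTVS} (a b : X) t : vadd (vscal t a) (vscal (1 - t) b) = vadd a (vscal (1-t) (vadd b (vscal (-1) a))).
Proof. vsolve a b ((@vzero X)) ((@vzero X)); ring. Qed.

Definition comb {X : LCTVS} (t : R) (x y : X) : X := vadd (vscal t x) (vscal (1 - t) y).

Lemma ERle_mono (e : ER) (x y : R) : ER_le e (Fin x) -> x <= y -> ER_le e (Fin y).
Proof. destruct e; simpl; intros; auto; lra. Qed.

Lemma dom_fin {X : LCTVS} (f : X -> ER) x : proper f -> dom f x -> exists p, f x = Fin p.
Proof.
  intros [_ Hp] Hd; unfold dom in Hd. specialize (Hp x). destruct (f x); eauto; congruence.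
Qed.

Lemma conv_fin {X : LCTVS} (f : X -> ER) x y t px py : proper f -> convex_fun f ->
  f x = Fin px -> f y = Fin py -> 0 <= t <= 1 ->
  exists p, f (comb t x y) = Fin p /\ p <= t * px + (1 - t) * py.
Proof.
  intros [_ Hp] Hc Hx Hy Ht.
  assert (H := Hc x y px py t). rewrite Hx, Hy in H. simpl in H.
  specialize (H (Rle_refl _) (Rle_refl _) Ht). unfold comb.
  specialize (Hp (vadd (vscal t x) (vscal (1 - t) y))).
  destruct (f (vadd (vscal t x) (vscal (1 - t) y))); simpl in H; try tauto; eauto.
Qed.

Definition Rep {X : LCTVS} (f : X -> ER) (p : R) (z u : X) (eta : R) : Prop :=
  exists b c r, 0 <= b <= 1 /\ b <= eta /\ ER_le (f c) (Fin r) /\ b * (r - p) <= eta /\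
    u = comb (1 - b) z c.

Lemma Rep_mono {X : LCTVS} (f : X -> ER) p z u e1 e2 : Rep f p z u e1 -> e1 <= e2 -> Rep f p z u e2.
Proof.
  intros (b & c & r & H1 & H2 & H3 & H4 & H5) He. exists b, c, r; repeat split; auto; lra.
Qed.

Lemma Rep_refl {X : LCTVS} (f : X -> ER) p z e : f z = Fin p -> 0 <= e -> Rep f p z z e.
Proof.
  intros Hz He. exists 0, z, p. rewrite Hz. simpl. repeat split; try lra.
  unfold comb. vsolve z (@vzero X) (@vzero X) (@vzero X); ring.
Qed.

Lemma Rep_val {X : LCTVS} (f : X -> ER) p z u e : convex_fun f -> f z = Fin p ->
  Rep f p z u e -> ER_le (f u) (Fin (p + e)).
Proof.
  intros Hc Hz (b & c & r & H1 & H2 & H3 & H4 & H5). subst u.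
  assert (H := Hc z c p r (1 - b)). rewrite Hz in H. simpl in H.
  specialize (H (Rle_refl _) H3 ltac:(lra)). unfold comb.
  eapply ERle_mono; [exact H| nra].
Qed.

Lemma Rep_trans {X : LCTVS} (f : X -> ER) p z z' p' w e1 e2 : proper f -> convex_fun f ->
  f z = Fin p -> f z' = Fin p' -> Rep f p z z' e1 -> Rep f p' z' w e2 ->
  Rep f p z w (2 * e1 + e2).
Proof.
  intros Hp Hc Hz Hz' (b & c & r & Hb1 & Hb2 & Hcr & Hb4 & Ez') (a & e & re & Ha1 & Ha2 & Her & Ha4 & Ew).
  assert (Hp' : p' <= p + b * (r - p)).
  { assert (H := Hc z c p r (1 - b)). rewrite Hz in H. simpl in H.
    specialize (H (Rle_refl _) Hcr ltac:(lra)). fold (comb (1 - b) z c) in H.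
    rewrite <- Ez', Hz' in H. simpl in H. nra. }
  set (g := a + b - a * b).
  destruct (Req_dec g 0) as [Hg|Hg].
  - unfold g in Hg. assert (0 <= b * (1 - a)) by (apply Rmult_le_pos; lra).
    assert (a = 0) by lra. subst a. assert (b = 0) by lra. subst b.
    exists 0, z, p. rewrite Hz. simpl. repeat split; try lra.
    rewrite Ew, Ez'. unfold comb. vsolve z c e (@vzero X); ring.
  - assert (Hg0 : 0 < g) by (unfold g in *; nra).
    set (l := (1 - a) * b / g).
    assert (Hl : 0 <= l <= 1).
    { unfold l; split.
      - apply Rmult_le_pos; [nra| left; apply Rinv_0_lt_compat; lra].
      - apply (Rmult_le_reg_r g); [lra|]. unfold Rdiv. rewrite Rmult_assoc, Rinv_l; [|lra].
        unfold g; nra. }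
    exists g, (comb l c e), (l * r + (1 - l) * re). repeat split; try lra.
    + unfold g; nra.
    + unfold g; nra.
    + apply Hc; auto.
    + replace (g * (l * r + (1 - l) * re - p)) with ((1 - a) * b * (r - p) + a * (re - p') + a * (p' - p)).
      2:{ unfold l. field_simplify; [|lra]. unfold g; field; lra. }
      assert ((1 - a) * b * (r - p) <= e1).
      { destruct (Rle_dec 0 (b * (r - p))); nra. }
      assert (a * (p' - p) <= e1).
      { destruct (Rle_dec 0 (p' - p)); nra. }
      lra.
    + rewrite Ew, Ez'. unfold comb, l. vsolve z c e (@vzero X); unfold g in *; field; lra.
Qed.

Lemma Rep_comb {X : LCTVS} (f : X -> ER) a b a' b' t pa pb p e1 e2 : proper f -> convex_fun f ->
  f a = Fin pa -> f b = Fin pb -> f (comb t a b) = Fin p -> 0 <= t <= 1 ->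
  Rep f pa a a' e1 -> Rep f pb b b' e2 -> e1 + e2 <= 1 ->
  Rep f p (comb t a b) (comb t a' b') ((e1 + e2) * (1 + (t * pa + (1 - t) * pb - p))).
Proof.
  intros Hp Hc Ha Hb Hz Ht (b1 & c1 & r1 & H11 & H12 & H13 & H14 & E1) (b2 & c2 & r2 & H21 & H22 & H23 & H24 & E2) He.
  assert (HK : p <= t * pa + (1 - t) * pb).
  { assert (H := Hc a b pa pb t). rewrite Ha, Hb in H. simpl in H.
    specialize (H (Rle_refl _) (Rle_refl _) Ht). fold (comb t a b) in H. rewrite Hz in H. exact H. }
  set (K := t * pa + (1 - t) * pb - p).
  assert (0 <= K) by (unfold K; lra).
  set (g := b1 + b2).
  destruct (Req_dec g 0) as [Hg|Hg].
  - assert (b1 = 0) by (unfold g in Hg; lra). assert (b2 = 0) by (unfold g in Hg; lra). subst b1 b2.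
    exists 0, (comb t a b), p. rewrite Hz. simpl. repeat split; try lra.
    + assert (0 <= (e1+e2)*(1+K)) by (apply Rmult_le_pos; lra); nra.
    + assert (0 <= (e1+e2)*(1+K)) by (apply Rmult_le_pos; lra); nra.
    + rewrite E1, E2. unfold comb. vsolve a b c1 c2; ring.
  - assert (Hg0 : 0 < g) by (unfold g in *; lra).
    set (l := b1 / g).
    assert (Hl : 0 <= l <= 1).
    { unfold l; split.
      - apply Rmult_le_pos; [lra| left; apply Rinv_0_lt_compat; lra].
      - apply (Rmult_le_reg_r g); [lra|]. unfold Rdiv. rewrite Rmult_assoc, Rinv_l; [|lra].
        unfold g; lra. }
    set (X1 := comb t c1 b). set (X2 := comb t a c2).
    set (q1 := t * r1 + (1 - t) * pb). set (q2 := t * pa + (1 - t) * r2).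
    assert (HX1 : ER_le (f X1) (Fin q1)) by (apply Hc; auto; rewrite Hb; simpl; lra).
    assert (HX2 : ER_le (f X2) (Fin q2)) by (apply Hc; auto; rewrite Ha; simpl; lra).
    exists g, (comb l X1 X2), (l * q1 + (1 - l) * q2). repeat split; try lra.
    + unfold g; lra.
    + unfold g. assert (0 <= (b1 + b2) * K) by (apply Rmult_le_pos; lra). nra.
    + apply Hc; auto.
    + replace (g * (l * q1 + (1 - l) * q2 - p)) with (t * (b1 * (r1 - pa)) + (1 - t) * (b2 * (r2 - pb)) + (b1 + b2) * K).
      2:{ unfold l, q1, q2, K. field_simplify; [|lra]. unfold g; field; lra. }
      assert (t * (b1 * (r1 - pa)) <= e1) by (destruct (Rle_dec 0 (b1 * (r1 - pa))); nra).
      assert ((1 - t) * (b2 * (r2 - pb)) <= e2) by (destruct (Rle_dec 0 (b2 * (r2 - pb))); nra).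
      assert ((b1 + b2) * K <= (e1 + e2) * K) by (apply Rmult_le_compat_r; lra).
      nra.
    + rewrite E1, E2. unfold l, X1, X2, comb. vsolve a b c1 c2; unfold g in *; field; lra.
Qed.

Lemma div01 x y : 0 <= x <= y -> 0 < y -> 0 <= x / y <= 1.
Proof.
  intros H Hy. split.
  - apply Rmult_le_pos; [lra| left; apply Rinv_0_lt_compat; lra].
  - apply (Rmult_le_reg_r y); [lra|]. unfold Rdiv. rewrite Rmult_assoc, Rinv_l; lra.
Qed.

Lemma seg_decomp {X : LCTVS} (a b w : X) t s : 0 <= t <= 1 -> 0 <= s <= 1 ->
  w = vadd a (vscal s (vadd b (vscal (-1) a))) ->
  exists al e, 0 <= al <= 1 /\ (e = a \/ e = b) /\ w = comb (1 - al) (comb t a b) e.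
Proof.
  intros Ht Hs Ew. subst w.
  destruct (Rle_dec (1 - t) s) as [H1|H1].
  - destruct (Req_dec t 0) as [Ht0|Ht0].
    + subst t. assert (s = 1) by lra. subst s.
      exists 0, b. split; [lra|]. split; [auto|]. unfold comb. vsolve a b (@vzero X) (@vzero X); ring.
    + exists ((s - (1 - t)) / t), b. split; [apply div01; lra|]. split; [auto|].
      unfold comb. vsolve a b (@vzero X) (@vzero X); field; lra.
  - exists (((1 - t) - s) / (1 - t)), a. split; [apply div01; lra|]. split; [auto|].
    unfold comb. vsolve a b (@vzero X) (@vzero X); field; lra.
Qed.

Lemma comb_fix {X : LCTVS} (z e : X) d : d <> 0 -> comb (1 - d) z e = z -> e = z.
Proof.
  intros Hd H.
  assert (E : e = comb (1 - / d) z (comb (1 - d) z e)).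
  { unfold comb. vsolve z e (@vzero X) (@vzero X); field; auto. }
  rewrite H in E. rewrite E. unfold comb. vsolve z (@vzero X) (@vzero X) (@vzero X); ring.
Qed.

Lemma comb_same {X : LCTVS} (z : X) t : comb t z z = z.
Proof. unfold comb. vsolve z (@vzero X) (@vzero X) (@vzero X); ring. Qed.

Lemma sep_pt {X : LCTVS} (z p : X) : exists O, is_open O /\ O z /\ (p <> z -> ~ O p).
Proof.
  destruct (classic (p = z)) as [E|E].
  - exists (fun _ => True). split; [apply open_full|]. split; auto.
  - destruct (hausdorff z p) as (A & B & HA & HB & Az & Bp & D); [auto|].
    exists A. split; auto. split; auto. intros _ Ap. exact (D p Ap Bp).
Qed.

Definition Inv {X : LCTVS} (f : X -> ER) (U : X -> Prop) (z : X) : Prop :=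
  exists p, f z = Fin p /\ forall A eps, is_open A -> A z -> 0 < eps ->
    exists u, U u /\ A u /\ Rep f p z u eps.

Definition segdense {X : LCTVS} (U : X -> Prop) : Prop :=
  forall x y, U x -> U y -> forall z, segment x y z -> closure (fun w => segment x y w /\ U w) z.

Lemma seg_inv {X : LCTVS} (f : X -> ER) (U : X -> Prop) a b t :
  proper f -> convex_fun f -> (forall u, U u -> dom f u) -> segdense U ->
  U a -> U b -> 0 <= t <= 1 -> Inv f U (comb t a b).
Proof.
  intros Hp Hc HU Hd Ua Ub Ht.
  destruct (dom_fin f a Hp (HU a Ua)) as [pa Ha].
  destruct (dom_fin f b Hp (HU b Ub)) as [pb Hb].
  destruct (conv_fin f a b t pa pb Hp Hc Ha Hb Ht) as (p & Hz & _).
  set (z := comb t a b) in *.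
  exists p. split; [exact Hz|]. intros A eps HA Az Heps.
  set (S := Rabs pa + Rabs pb + Rabs p).
  assert (HS : 0 <= S) by (unfold S; pose proof (Rabs_pos pa); pose proof (Rabs_pos pb); pose proof (Rabs_pos p); lra).
  set (M := 1 + eps + S).
  set (d := eps / M).
  assert (HdM : d * M = eps) by (unfold d; field; unfold M; lra).
  assert (Hd0 : 0 < d) by (unfold d; apply Rdiv_lt_0_compat; unfold M; lra).
  assert (Hd1 : d <= 1) by (unfold M in HdM; nra).
  assert (Hde : d <= eps) by (unfold M in HdM; nra).
  assert (HdS : d * S <= eps) by (unfold M in HdM; nra).
  destruct (sep_pt z (comb (1 - d) z a)) as (Oa & HOa & Oaz & Oap).
  destruct (sep_pt z (comb (1 - d) z b)) as (Ob & HOb & Obz & Obp).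
  set (W := fun x => A x /\ (Oa x /\ Ob x)).
  assert (HW : is_open W) by (apply open_inter; auto; apply open_inter; auto).
  destruct (loc_convex W z HW (conj Az (conj Oaz Obz))) as (C & HC & Cz & CW & Cconv).
  assert (Zseg : segment a b z).
  { exists (1 - t). split; [lra|]. unfold z, comb. vsolve a b (@vzero X) (@vzero X); ring. }
  destruct (Hd a b Ua Ub z Zseg C HC Cz) as (w & Cw & (s & Hs & Ew) & Uw).
  exists w. split; [exact Uw|]. split; [apply (CW w Cw)|].
  destruct (seg_decomp a b w t s Ht Hs Ew) as (al & e & Hal & He & Ew').
  fold z in Ew'.
  assert (Hfe : exists pe, f e = Fin pe /\ pe - p <= S).
  { destruct He as [He|He]; subst e.
    - exists pa. split; auto. unfold S. pose proof (Rle_abs pa). pose proof (Rabs_pos pb).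
      pose proof (Rle_abs (-p)). rewrite Rabs_Ropp in *. lra.
    - exists pb. split; auto. unfold S. pose proof (Rle_abs pb). pose proof (Rabs_pos pa).
      pose proof (Rle_abs (-p)). rewrite Rabs_Ropp in *. lra. }
  destruct Hfe as (pe & Hpe & Hpe2).
  destruct (classic (comb (1 - d) z e = z)) as [E|E].
  - apply comb_fix in E; [|lra]. subst e. rewrite comb_same in Ew'. rewrite Ew'.
    apply Rep_refl; auto; lra.
  - assert (Hnot : ~ C (comb (1 - d) z e)).
    { intro Cp. destruct (CW _ Cp) as (_ & Hoa & Hob).
      destruct He as [He|He]; subst e; [exact (Oap E Hoa)| exact (Obp E Hob)]. }
    assert (Hald : al <= d).
    { destruct (Rle_dec al d) as [H|H]; auto. exfalso. apply Hnot.
      assert (Eq : comb (1 - d) z e = comb (d / al) w z).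
      { rewrite Ew'. unfold comb. vsolve z e (@vzero X) (@vzero X); field; lra. }
      rewrite Eq. apply Cconv; auto. apply div01; lra. }
    exists al, e, pe. rewrite Hpe. simpl. repeat split; try lra; [|exact Ew'].
    assert (al * (pe - p) <= al * S) by (apply Rmult_le_compat_l; lra).
    assert (al * S <= d * S) by (apply Rmult_le_compat_r; lra). lra.
Qed.

Lemma comb_cont {X : LCTVS} (A : X -> Prop) t a b : is_open A -> A (comb t a b) ->
  exists Aa Ab, is_open Aa /\ is_open Ab /\ Aa a /\ Ab b /\
    forall x y, Aa x -> Ab y -> A (comb t x y).
Proof.
  intros HA Az. unfold comb in Az.
  destruct (vadd_cont A _ _ HA Az) as (A1 & B1 & HA1 & HB1 & A1a & B1b & H1).
  destruct (vscal_cont A1 t a HA1 A1a) as (e1 & Ba & He1 & HBa & Baa & Hba).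
  destruct (vscal_cont B1 (1 - t) b HB1 B1b) as (e2 & Bb & He2 & HBb & Bbb & Hbb).
  exists Ba, Bb. repeat split; auto. intros x y Hx Hy. unfold comb. apply H1.
  - apply Hba; auto. rewrite Rminus_diag, Rabs_R0; auto.
  - apply Hbb; auto. rewrite Rminus_diag, Rabs_R0; auto.
Qed.

Lemma inv_convex {X : LCTVS} (f : X -> ER) (U : X -> Prop) a b t :
  proper f -> convex_fun f -> (forall u, U u -> dom f u) -> segdense U ->
  Inv f U a -> Inv f U b -> 0 <= t <= 1 -> Inv f U (comb t a b).
Proof.
  intros Hp Hc HU Hd (pa & Ha & Ia) (pb & Hb & Ib) Ht.
  destruct (conv_fin f a b t pa pb Hp Hc Ha Hb Ht) as (p & Hz & Hpz).
  exists p. split; [exact Hz|]. intros A eps HA Az Heps.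
  set (K := t * pa + (1 - t) * pb - p).
  assert (HK : 0 <= K) by (unfold K; lra).
  set (eta := Rmin (1/4) (eps / (8 * (1 + K)))).
  assert (Heta0 : 0 < eta).
  { unfold eta. apply Rmin_glb_lt; [lra|]. apply Rdiv_lt_0_compat; lra. }
  assert (Heta1 : eta <= 1/4) by apply Rmin_l.
  assert (Heta2 : eta * (8 * (1 + K)) <= eps).
  { assert (eta <= eps / (8 * (1 + K))) by apply Rmin_r.
    apply (Rmult_le_compat_r (8 * (1 + K))) in H; [|lra].
    unfold Rdiv in H. rewrite Rmult_assoc, Rinv_l in H; lra. }
  destruct (comb_cont A t a b HA Az) as (Aa & Ab & HAa & HAb & Aaa & Abb & HAc).
  destruct (Ia Aa eta HAa Aaa Heta0) as (a' & Ua' & Aa' & Ra).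
  destruct (Ib Ab eta HAb Abb Heta0) as (b' & Ub' & Ab' & Rb).
  assert (Rz := Rep_comb f a b a' b' t pa pb p eta eta Hp Hc Ha Hb Hz Ht Ra Rb ltac:(lra)).
  fold K in Rz.
  destruct (seg_inv f U a' b' t Hp Hc HU Hd Ua' Ub' Ht) as (p' & Hz' & I').
  destruct (I' A (eps / 2) HA (HAc a' b' Aa' Ab') ltac:(lra)) as (w & Uw & Aw & Rw).
  exists w. split; auto. split; auto.
  eapply Rep_mono; [eapply (Rep_trans f p (comb t a b) (comb t a' b') p' w); eauto|].
  nra.
Qed.

Lemma co_inv {X : LCTVS} (f : X -> ER) (U : X -> Prop) x :
  proper f -> convex_fun f -> (forall u, U u -> dom f u) -> segdense U ->
  co U x -> Inv f U x.
Proof.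
  intros Hp Hc HU Hd Hx. apply Hx.
  - intros a b t Ha Hb Ht. apply (inv_convex f U a b t); auto.
  - intros u Uu. destruct (dom_fin f u Hp (HU u Uu)) as [pu Hu].
    exists pu. split; auto. intros A eps HA Au He. exists u. split; auto. split; auto.
    apply Rep_refl; auto; lra.
Qed.

Lemma inv_closure {X : LCTVS} (f : X -> ER) (U : X -> Prop) z p r :
  convex_fun f -> Inv f U z -> f z = Fin p -> p <= r -> closureXR (epi_restr f U) z r.
Proof.
  intros Hc (p0 & Hz0 & I) Hz Hr. rewrite Hz in Hz0. injection Hz0 as <-.
  intros A eps HA Az He.
  destruct (I A (eps / 2) HA Az ltac:(lra)) as (u & Uu & Au & Ru).
  exists u, (r + eps / 2). split; auto. split.
  - replace (r + eps / 2 - r) with (eps / 2) by ring. rewrite Rabs_pos_eq; lra.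
  - split; auto. eapply ERle_mono; [eapply Rep_val; eauto| lra].
Qed.

Lemma closure_epi {X : LCTVS} (f : X -> ER) (W : X -> Prop) x r :
  lsc f -> closureXR (epi_restr f W) x r -> ER_le (f x) (Fin r).
Proof.
  intros Hl Hcl. destruct (classic (ER_le (f x) (Fin r))) as [H|H]; auto. exfalso.
  set (r' := match f x with Fin v => (r + v) / 2 | _ => r + 1 end).
  assert (Hr' : r < r' /\ ER_lt (Fin r') (f x)).
  { unfold r'. destruct (f x) as [v| |]; simpl in H |- *.
    - split; [lra|]. split; simpl; [lra|]. intro E; injection E; lra.
    - split; [lra|]. split; simpl; auto. discriminate.
    - exfalso; auto. }
  destruct Hr' as [Hrr Hlt].
  destruct (Hl x r' Hlt) as (A & HA & Ax & HAl).
  destruct (Hcl A (r' - r) HA Ax ltac:(lra)) as (y & s & Ay & Hs & _ & Hfy).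
  specialize (HAl y Ay). destruct HAl as [Hle Hne].
  apply Rabs_def2 in Hs.
  destruct (f y); simpl in *; auto; lra.
Qed.

Lemma ER_inf_ge (p : R) : ER_inf (fun r => p <= r) = Fin p.
Proof.
  unfold ER_inf.
  destruct (ClassicalDescription.excluded_middle_informative (exists r, p <= r)) as [_|N].
  2:{ exfalso; apply N; exists p; lra. }
  destruct (ClassicalDescription.excluded_middle_informative (exists m, forall r, p <= r -> m <= r)) as [_|N].
  2:{ exfalso; apply N; exists p; auto. }
  f_equal.
  set (P := fun m => (forall r, p <= r -> m <= r) /\ forall m', (forall r, p <= r -> m' <= r) -> m' <= m).
  assert (HP : exists m, P m).
  { exists p. split; auto. intros m' Hm'. apply Hm'; lra. }
  destruct (epsilon_spec (inhabits 0) P HP) as [H1 H2].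
  fold P. apply Rle_antisym.
  - apply H1; lra.
  - apply H2; auto.
Qed.

Theorem mainTheorem8 (X : LCTVS) (f : X -> ER) (U : X -> Prop)
  (Hproper : proper f) (Hconv : convex_fun f) (Hlsc : lsc f)
  (HU : forall u, U u -> dom f u)
  (Hdense : self_segment_dense U (dom f)) :
  (forall x, co U x -> f x = fbar f U x) /\
  (forall x, fbar f U x = fbar f (co U) x).
Proof.
  destruct Hdense as (_ & _ & _ & Hsd).
  assert (Hsd' : segdense U) by exact Hsd.
  split.
  - intros x Hx.
    assert (Ix := co_inv f U x Hproper Hconv HU Hsd' Hx).
    destruct Ix as (p & Hp & Ip).
    unfold fbar.
    replace (fun r => closureXR (epi_restr f U) x r) with (fun r => p <= r).
    + rewrite ER_inf_ge; auto.
    + apply functional_extensionality; intro r. apply propositional_extensionality. split.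
      * intro Hr. apply (inv_closure f U x p r Hconv); auto. exists p; auto.
      * intro Hr. apply closure_epi in Hr; auto. rewrite Hp in Hr. exact Hr.
  - intro x. unfold fbar. f_equal.
    apply functional_extensionality; intro r. apply propositional_extensionality. split.
    + intros Hr A eps HA Ax He. destruct (Hr A eps HA Ax He) as (y & s & Ay & Hs & Uy & Hfy).
      exists y, s. repeat split; auto. intros C HC HUC. apply HUC; exact Uy.
    + intros Hr A eps HA Ax He.
      destruct (Hr A (eps / 2) HA Ax ltac:(lra)) as (y & s & Ay & Hs & Uy & Hfy).
      assert (Iy := co_inv f U y Hproper Hconv HU Hsd' Uy).
      destruct (dom_fin f y Hproper) as (py & Hpy).
      { unfold dom. intro E. rewrite E in Hfy. simpl in Hfy. exact Hfy. }
      assert (Hps : py <= s) by (rewrite Hpy in Hfy; exact Hfy).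
      destruct (inv_closure f U y py s Hconv Iy Hpy Hps A (eps / 2) HA Ay ltac:(lra))
        as (y' & s' & Ay' & Hs' & E').
      exists y', s'. split; auto. split; auto.
      apply Rabs_def2 in Hs. apply Rabs_def2 in Hs'. apply Rabs_def1; lra.
Qed.
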